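(* Let $R$ be a finite chain ring with maximal ideal $\langle\gamma\rangle$ where $\gamma$ has odd nilpotency index $e$, and residue field $\mathbb F_q$. Then for every positive integer $n$ with $\gcd(n,q)=1$ there is no self-dual cyclic code of length $n$ over $R$.
   Context: A finite chain ring is a finite commutative local ring whose ideals are linearly ordered; its maximal ideal is generated by a nilpotent $\gamma$ of nilpotency index $e$, with residue field $R/\langle\gamma\rangle$. A code of length $n$ is an $R$-submodule of $R^n$; cyclic means closed under cyclic shift; self-dual means $C=C^\perp$ for the standard inner product $[u,v]=\sum u_iv_i$. *)

(* Defs.v *)
From HB Require Import structures.
From mathcomp Require Import all_boot all_order all_algebra.
Set Implicit Arguments. Unset Strict Implicit. Unset Printing Implicit Defensive.
Import GRing.Theory.
Local Open Scope ring_scope.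

Definition is_ideal (R : finComNzRingType) (I : {set R}) : bool :=
  [&& (0 : R) \in I,
      [forall x, forall y, (x \in I) ==> (y \in I) ==> (x + y \in I)] &
      [forall r, forall x, (x \in I) ==> (r * x \in I)]].

Definition is_unitb (R : finComNzRingType) (x : R) : bool := [exists y, x * y == 1].

Definition principal (R : finComNzRingType) (g : R) : {set R} := [set g * r | r : R].

(* R is a finite chain ring whose maximal ideal is <g>, g of nilpotency index e:
   R is local with maximal ideal (= set of non-units) equal to <g>, the ideals
   of R are linearly ordered by inclusion, g^e = 0 and g^(e-1) <> 0. *)
Definition chain_ring_with (R : finComNzRingType) (g : R) (e : nat) : Prop :=
  [/\ (forall I J : {set R}, is_ideal I -> is_ideal J -> I \subset J \/ J \subset I),
      [set x : R | ~~ is_unitb x] = principal g,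
      g ^+ e = 0 & g ^+ e.-1 != 0].

Definition residue_size (R : finComNzRingType) (g : R) : nat :=
  (#|[set: R]| %/ #|principal g|)%N.

Definition is_code (R : finComNzRingType) (n : nat) (C : {set 'rV[R]_n}) : Prop :=
  [/\ 0 \in C,
      (forall u v, u \in C -> v \in C -> u + v \in C) &
      (forall (a : R) u, u \in C -> a *: u \in C)].

(* cyclic shift (c_0,...,c_{n-1}) |-> (c_{n-1},c_0,...,c_{n-2}) *)
Definition cshift (R : finComNzRingType) (n : nat) (v : 'rV[R]_n) : 'rV[R]_n :=
  \row_(i < n) v 0 (ord_pred i).

Definition is_cyclic_code (R : finComNzRingType) (n : nat) (C : {set 'rV[R]_n}) : Prop :=
  is_code C /\ (forall v, v \in C -> cshift v \in C).

Definition dotp (R : finComNzRingType) (n : nat) (u v : 'rV[R]_n) : R :=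
  \sum_(i < n) u 0 i * v 0 i.

Definition dual_code (R : finComNzRingType) (n : nat) (C : {set 'rV[R]_n}) : {set 'rV[R]_n} :=
  [set v | [forall u in C, dotp u v == 0]].

Definition self_dual (R : finComNzRingType) (n : nat) (C : {set 'rV[R]_n}) : Prop :=
  C = dual_code C.

(* Main.v *)
Require Import Defs.
From HB Require Import structures.
From mathcomp Require Import all_boot all_order all_algebra.
From mathcomp Require Import all_fingroup all_solvable zify.
Local Open Scope ring_scope.

Section Helpers.
Set Implicit Arguments. Unset Strict Implicit.
Import GRing.Theory FinRing.Theory.

Lemma gs_aux (R : finComNzRingType) (G : {set R}) :
  (0:R) \in G -> (forall x y, x \in G -> y \in G -> x + y \in G) ->
  group_set (G : {set R}).
Proof.
move=> G0 GD.
apply/andP; split; first exact: G0.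
apply/subsetP => z /mulsgP [x y Hx Hy ->]. by rewrite zmodMgE GD.
Qed.

Lemma nat_in (R : finComNzRingType) (G : {set R}) (n : nat)
  (G0 : (0:R) \in G) (GD : forall x y, x \in G -> y \in G -> x + y \in G) :
  coprime n (#|[set: R]| %/ #|G|) -> (n%:R : R) \in G -> (1:R) \in G.
Proof.
move=> hc hn.
pose H := Group (gs_aux G0 GD).
have TN : ([set: R] \subset 'N(H))%g.
  exact: (sub_abelian_norm (zmod_abelian _) (subsetT H)).
have NH : forall y : R, (y \in 'N(H))%g.
  by move=> y; apply: (subsetP TN); rewrite in_setT.
pose x := coset H (GRing.one R).
have h1 : (#[x]%g %| n)%N.
  rewrite order_dvdn /x -morphX ?NH //= zmodXgE.
  by apply/eqP; apply: coset_id.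
have h2 : (#[x]%g %| #|[set: R]| %/ #|G|)%N.
  have -> : (#|[set: R]| %/ #|G| = #|([set: R] / H)%g|)%N.
    by rewrite card_quotient // -(Lagrange (subsetT H)) mulKn //.
  apply: (@order_dvdG _ ([set: R] / H)%G).
  by apply: mem_quotient; rewrite in_setT.
have : #[x]%g = 1%N.
  by apply/eqP; rewrite -dvdn1 -(eqP hc) dvdn_gcd h1 h2.
move/eqP; rewrite order_eq1 => /eqP.
move/(coset_idr (NH _)). done.
Qed.

Lemma iter_pred_mod n (i : 'I_n) k :
  ((iter k (@ord_pred n) i + k) %% n = i %% n)%N.
Proof.
have n0 : (0 < n)%N by case: i => j /=; case: n => //.
elim: k => [|k IH] /=; first by rewrite addn0.
rewrite modnDml.
have -> : ((iter k (@ord_pred n) i + n).-1 + k.+1 = (iter k (@ord_pred n) i + k) + n)%N.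
  case: n n0 {IH} i => // n0 _ i; rewrite addnS /=; lia.
by rewrite modnDr.
Qed.

Lemma iter_pred_inj n (i : 'I_n) : injective (fun k : 'I_n => iter k (@ord_pred n) i).
Proof.
move=> k1 k2 /= E.
have := iter_pred_mod i k1; rewrite E -(iter_pred_mod i k2) => /eqP.
rewrite eqn_modDl !modn_small // => /eqP H; exact: val_inj.
Qed.

Lemma principal_in (R : finComNzRingType) (h x : R) :
  reflect (exists r, x = h * r) (x \in principal h).
Proof.
apply: (iffP imsetP) => [[r _ ->]|[r ->]]; by exists r.
Qed.

Lemma principal_ideal (R : finComNzRingType) (h : R) : is_ideal (principal h).
Proof.
apply/and3P; split.
- by apply/principal_in; exists 0; rewrite mulr0.
- apply/forallP=> x; apply/forallP=> y; apply/implyP=> /principal_in [r ->].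
  apply/implyP=> /principal_in [s ->]; apply/principal_in; exists (r + s).
  by rewrite mulrDr.
- apply/forallP=> r; apply/forallP=> x; apply/implyP=> /principal_in [s ->].
  by apply/principal_in; exists (r * s); rewrite mulrCA.
Qed.

Lemma dotp_const (R : finComNzRingType) n (u : 'rV[R]_n) (a : R) :
  dotp u (const_mx a) = (\sum_i u 0 i) * a.
Proof. rewrite /dotp mulr_suml; apply: eq_bigr => i _; by rewrite mxE. Qed.

End Helpers.
Unset Implicit Arguments. Set Strict Implicit.
Import GRing.Theory.

Theorem mainTheorem16 (R : finComNzRingType) (g : R) (e : nat)
  (hR : chain_ring_with g e) (he : odd e)
  (n : nat) (hn : (0 < n)%N) (hcop : coprime n (residue_size g)) :
  ~ exists C : {set 'rV[R]_n}, is_cyclic_code C /\ self_dual C.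
Proof.
move=> [C [[[C0 CD CZ] Csh] Csd]].
case: hR => hcmp hU hge hge1.
have nonunitP : forall x : R, (~~ is_unitb x) = (x \in principal g).
  by move=> x; rewrite -hU inE.
have [P0 PD PM] := and3P (principal_ideal g).
have P0' : (0:R) \in principal g by [].
have PD' : forall x y, x \in principal g -> y \in principal g -> x + y \in principal g.
  by move=> x y hx hy; move/forallP: PD => /(_ x) /forallP /(_ y); rewrite hx hy.
have nunit : is_unitb (n%:R : R).
  rewrite -[is_unitb _]negbK nonunitP; apply/negP => hin.
  have := nat_in P0' PD' hcop hin; rewrite -nonunitP => /negP; apply.
  by apply/existsP; exists 1; rewrite mulr1.
case/existsP: nunit => ny /eqP hny.
pose I := [set a : R | const_mx a \in C].
have Isum : forall v, v \in C -> (\sum_i v 0 i) \in I.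
  move=> v vC; rewrite inE.
  have iterC : forall k, iter k (@cshift R n) v \in C.
    by elim=> //= k IH; apply: Csh.
  have sumC : forall m, \sum_(k < m) iter k (@cshift R n) v \in C.
    elim=> [|m IH]; first by rewrite big_ord0.
    by rewrite big_ord_recr /= CD.
  have -> : const_mx (\sum_i v 0 i) = \sum_(k < n) iter k (@cshift R n) v.
    apply/rowP => i; rewrite mxE summxE.
    have E : forall k j, (iter k (@cshift R n) v) 0 j = v 0 (iter k (@ord_pred n) j).
      elim=> [|k IH] j //=.
      by rewrite /cshift mxE IH -iterSr.
    under [RHS]eq_bigr do rewrite E.
    by rewrite [LHS](reindex_inj (@iter_pred_inj n i)).
  exact: sumC.
have I0 : (0:R) \in I.
  rewrite inE; have -> : const_mx 0 = 0 :> 'rV[R]_n by apply/rowP=> i; rewrite !mxE.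
  exact: C0.
have IadD : forall x y, x \in I -> y \in I -> x + y \in I.
  move=> x y; rewrite !inE => xC yC.
  have -> : const_mx (x + y) = const_mx x + const_mx y :> 'rV[R]_n.
    by apply/rowP=> i; rewrite !mxE.
  exact: CD.
have IM : forall r x, x \in I -> r * x \in I.
  move=> r x; rewrite !inE => xC.
  have -> : const_mx (r * x) = r *: const_mx x :> 'rV[R]_n.
    by apply/rowP=> i; rewrite !mxE.
  exact: CZ.
have Iid : is_ideal I.
  apply/and3P; split => //.
  - apply/forallP=> x; apply/forallP=> y; apply/implyP=> hx; apply/implyP=> hy.
    exact: IadD.
  - apply/forallP=> r; apply/forallP=> x; apply/implyP=> hx; exact: IM.
have FB : forall a, (forall b, b \in I -> a * b = 0) -> a \in I.
  move=> a H; rewrite inE Csd inE.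
  apply/forallP => u; apply/implyP => uC.
  by rewrite dotp_const mulrC H // Isum.
have FC : forall a, a \in I -> (a * a) *+ n = 0.
  move=> a; rewrite inE => aC.
  have : const_mx a \in dual_code C by rewrite -Csd.
  rewrite inE => /forallP /(_ (const_mx a)); rewrite aC /= => /eqP.
  rewrite dotp_const.
  under eq_bigr do rewrite mxE.
  by rewrite sumr_const card_ord mulrnAl.
pose m := e./2.
have em : e = (m + m).+1.
  by have := odd_double_half e; rewrite he /m addnn => H; rewrite -{1}H.
have gmI : g ^+ m \in I.
  apply/negPn/negP => notin.
  have [sub|sub] := hcmp I (principal (g ^+ m)) Iid (principal_ideal _).
  - move/negP: (notin); apply; apply: FB => b bI.
    move: (subsetP sub b bI) => /principal_in [r Eb].
    case: (boolP (is_unitb r)) => [/existsP [y /eqP ry] | nu].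
    + exfalso; move/negP: notin; apply.
      have := IM y _ bI; congr (_ \in I).
      by rewrite Eb mulrC -mulrA ry mulr1.
    + rewrite Eb; move: nu; rewrite nonunitP => /principal_in [s ->].
      rewrite !mulrA -exprD -exprSr -em hge.
      by rewrite mul0r.
  - exfalso; move/negP: notin; apply; apply: (subsetP sub).
    by apply/principal_in; exists 1; rewrite mulr1.
have := FC _ gmI; rewrite -exprD -mulr_natr => /(congr1 (fun z => z * ny)).
rewrite -mulrA hny mulr1 mul0r => H0.
by move: hge1; rewrite em /= H0 eqxx.
Qed.
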